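(* Let $m\ge1$ and let $T$ be a finite tree with labels in an alphabet $\Gamma\supseteq\{a_1,\dots,a_m,\varepsilon\}$, in which every node has at most $m+1$ children and every leaf and every node with at least $2$ children is labelled $\varepsilon$. Let $N\ge1$. If for each $a\in\{a_1,\dots,a_m\}$ the tree $T$ contains at least $N$ nodes labelled $a$, then for each $a\in\{a_1,\dots,a_m\}$ we have $\mathrm{score}_a(T)\ge\log_{m+1}N$.
   Context: For a letter $a$, $\mathrm{score}_a(T)$ is defined recursively: if $T$ is a single leaf, $\mathrm{score}_a(T)=0$; if the root of $T$ has label $\gamma$ and exactly one child subtree $T_1$, then $\mathrm{score}_a(T)=\mathrm{score}_a(T_1)+\iota_a(\gamma)$ where $\iota_a(\gamma)=1$ if $\gamma=a$ and $0$ otherwise; if the root (labelled $\varepsilon$) has child subtrees $T_1,\dots,T_k$ with $k\ge2$, then $\mathrm{score}_a(T)=\max_{1\le i\le k}\big(\mathrm{score}_a(T_i)+\iota\big(\sum_{j\ne i}\mathrm{score}_a(T_j)\big)\big)$, where for a natural number $x$, $\iota(x)=0$ if $x=0$ and $\iota(x)=1$ if $x>0$. *)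

(* Defs.v *)
From mathcomp Require Import all_boot.
Set Implicit Arguments. Unset Strict Implicit. Unset Printing Implicit Defensive.

Inductive ltree (Gamma : Type) : Type :=
  | Node : Gamma -> seq (ltree Gamma) -> ltree Gamma.
Arguments Node {Gamma} _ _.

Section Trees.
Variable Gamma : eqType.

Definition iota0 (x : nat) : nat := (0 < x)%N.

Fixpoint score (a : Gamma) (t : ltree Gamma) {struct t} : nat :=
  match t with
  | Node g ts =>
      match ts with
      | [::] => 0
      | [:: t1] => score a t1 + (g == a)
      | _ =>
        let ss := map (score a) ts in
        \max_(i < size ss)
           (nth 0 ss i + iota0 (\sum_(j < size ss | j != i) nth 0 ss j))
      end
  end.

Fixpoint count_label (a : Gamma) (t : ltree Gamma) {struct t} : nat :=
  match t with
  | Node g ts => (g == a) + sumn (map (count_label a) ts)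
  end.

Fixpoint wf_tree (m : nat) (eps : Gamma) (t : ltree Gamma) {struct t} : bool :=
  match t with
  | Node g ts =>
      [&& size ts <= m.+1,
          ((size ts == 0) || (2 <= size ts)) ==> (g == eps)
        & all (wf_tree m eps) ts]
  end.
End Trees.

(* Main.v *)
Require Import Defs.
From mathcomp Require Import all_boot.
From Stdlib Require Import Reals.
From mathcomp Require Import zify.
From Stdlib Require Import Lra.

Module Aux.
Local Open Scope nat_scope.

Definition w (B s : nat) := expn B s - 1.

Lemma w_mono B s t : 0 < B -> s <= t -> w B s <= w B t.
Proof. by move=> hB st; rewrite /w; apply: leq_sub2r; apply: leq_pexp2l. Qed.

Lemma w_step B s : 2 <= B -> B * w B s <= w B s.+1.
Proof.
move=> hB; rewrite /w expnS.
have : 1 <= expn B s by rewrite expn_gt0; lia.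
move: (expn B s) => X hX; nia.
Qed.

Lemma w_succ B s : 2 <= B -> (w B s).+1 <= w B s.+1.
Proof.
move=> hB; rewrite /w expnS.
have : 1 <= expn B s by rewrite expn_gt0; lia.
move: (expn B s) => X hX; nia.
Qed.

Lemma w_add B s t : 1 <= B -> w B s + w B t <= w B (s + t).
Proof.
move=> hB; rewrite /w expnD.
have : 1 <= expn B s by rewrite expn_gt0; lia.
have : 1 <= expn B t by rewrite expn_gt0; lia.
move: (expn B s) (expn B t) => X Y hY hX; nia.
Qed.

Lemma key B (hB : 2 <= B) (ss : seq nat) : size ss <= B ->
  sumn (map (w B) ss) <=
  w B (\max_(i < size ss) (nth 0 ss i + iota0 (\sum_(j < size ss | j != i) nth 0 ss j))).
Proof.
move=> hk.
have -> : sumn (map (w B) ss) = \sum_(j < size ss) w B (nth 0 ss j).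
  by rewrite sumnE big_map (big_nth 0) big_mkord.
move: hk; move: (size ss) => k hk.
case: k hk => [|k] hk; first by rewrite big_ord0.
pose F := fun j : 'I_k.+1 => nth 0 ss j.
rewrite -/(F _).
change (\sum_(j < k.+1) w B (F j) <=
  w B (\max_(i < k.+1) (F i + iota0 (\sum_(j < k.+1 | j != i) F j)))).
have [i0 _ hi0] : {i0 : 'I_k.+1 | true & \max_i F i = F i0}.
  by case: (eq_bigmax F) => [|i0 h]; [rewrite card_ord | exists i0].
have hle : forall j, F j <= F i0 by move=> j; rewrite -hi0 leq_bigmax.
have hS : \sum_(j < k.+1) F j = F i0 + \sum_(j < k.+1 | j != i0) F j.
  by rewrite (bigD1 i0).
have hM := @leq_bigmax _ (fun i : 'I_k.+1 => F i + iota0 (\sum_(j < k.+1 | j != i) F j)) i0.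
move: hM; set M := \max_(i < k.+1) _ => hM.
have h1 : \sum_(j < k.+1) w B (F j) <= k.+1 * w B (F i0).
  rewrite -[k.+1 in X in _ <= X](card_ord k.+1) -sum_nat_const.
  by apply: leq_sum => j _; apply: w_mono => //; lia.
have h2 : \sum_(j < k.+1) w B (F j) <= w B (\sum_(j < k.+1) F j).
  apply: (big_rec2 (fun y1 y2 => y1 <= w B y2)); first by rewrite /w expn0.
  move=> j y1 y2 _ h; apply: leq_trans (w_add _ _ _ _); last lia.
  by rewrite leq_add2l.
move: hM hS h2; rewrite /iota0.
case: (ltnP 0 (\sum_(j < k.+1 | j != i0) F j)) => hr hM hS h2.
- apply: (leq_trans h1); apply: leq_trans (w_mono _ _ _ _ hM); last lia.
  rewrite addn1; apply: leq_trans (w_step _ _ hB); by rewrite leq_mul2r hk orbT.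
- apply: (leq_trans h2); apply: w_mono; lia.
Qed.


Fixpoint ltree_ind' (G : Type) (P : ltree G -> Prop)
  (H : forall g ts, foldr (fun t acc => P t /\ acc) True ts -> P (Node g ts))
  (t : ltree G) : P t :=
  match t with
  | Node g ts => H g ts ((fix aux (l : seq (ltree G)) :
        foldr (fun t acc => P t /\ acc) True l :=
        match l return foldr (fun t acc => P t /\ acc) True l with
        | [::] => I
        | t :: l' => conj (@ltree_ind' G P H t) (aux l')
        end) ts)
  end.

Lemma tree_bound (Gamma : eqType) (m : nat) (hm : 0 < m) (eps a : Gamma) (hae : a != eps)
  (t : ltree Gamma) : wf_tree m eps t -> count_label a t <= w m.+1 (score a t).
Proof.
elim/ltree_ind': t => g ts IH /= /and3P [hsz hg hall].
have hsum : sumn (map (count_label a) ts) <= sumn (map (w m.+1) (map (score a) ts)).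
  elim: ts IH hall {hsz hg} => [|t ts IHl] //= [h1 h2] /andP [w1 w2].
  by apply: leq_add; [apply: h1 | apply: IHl].
case: ts IH hsz hg hall hsum => [|t1 [|t2 rest]] IH hsz hg hall hsum.
- have /eqP hge : g == eps by apply: (implyP hg).
  have -> : (g == a) = false by apply/negbTE; rewrite hge eq_sym.
  by [].
- move: hsum => /=; rewrite !addn0 => hsum.
  case: (g == a) => /=; last by rewrite !addn0 add0n.
  rewrite add1n addn1; apply: leq_trans (w_succ _ _ _) => //; by rewrite ltnS.
- have /eqP hge : g == eps by apply: (implyP hg).
  have hga : (g == a) = false by apply/negbTE; rewrite hge eq_sym.
  rewrite hga add0n; apply: (leq_trans hsum).
  have := @key m.+1 hm (map (score a) [:: t1, t2 & rest]).
  rewrite size_map; move=> /(_ hsz); by [].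
Qed.

End Aux.

Lemma ln_le' (x y : R) : (0 < x)%R -> (x <= y)%R -> (ln x <= ln y)%R.
Proof.
move=> hx hxy; case: (Rle_lt_or_eq_dec _ _ hxy) => [h|<-].
- by apply: Rlt_le; apply: ln_increasing.
- exact: Rle_refl.
Qed.

Lemma INR_expn (B s : nat) : INR (expn B s) = (INR B ^ s)%R.
Proof.
elim: s => [|s IH]; first by rewrite expn0.
by rewrite expnS mulnE mult_INR IH.
Qed.

Theorem mainTheorem7 (Gamma : eqType) (m : nat) (hm : (1 <= m)%N)
  (eps : Gamma) (a : 'I_m -> Gamma) (a_inj : injective a)
  (a_neq_eps : forall i, a i != eps)
  (T : ltree Gamma) (hT : wf_tree m eps T)
  (N : nat) (hN : (1 <= N)%N)
  (hcount : forall i : 'I_m, (N <= count_label (a i) T)%N) :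
  forall i : 'I_m,
    (ln (INR N) / ln (INR (m + 1)) <= INR (score (a i) T))%R.
Proof.
move=> i.
have hb := @Aux.tree_bound Gamma m hm eps (a i) (a_neq_eps i) T hT.
have hNB : (N <= expn m.+1 (score (a i) T))%N.
  have := leq_trans (hcount i) hb; rewrite /Aux.w.
  have : (0 < expn m.+1 (score (a i) T))%N by rewrite expn_gt0.
  lia.
set s := score (a i) T in hNB *.
have -> : (m + 1)%nat = m.+1 by lia.
have hB : (1 < INR m.+1)%R.
  rewrite S_INR; have := pos_INR m; have : (1 <= INR m)%R.
    by apply: (le_INR 1 m); apply/leP.
  lra.
have hlnB : (0 < ln (INR m.+1))%R by rewrite -ln_1; apply: ln_increasing; lra.
have hN0 : (0 < INR N)%R by apply: lt_0_INR; apply/ltP.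
have h1 : (ln (INR N) <= INR s * ln (INR m.+1))%R.
  rewrite -ln_pow; last lra.
  apply: ln_le' => //; rewrite -INR_expn; apply: le_INR; exact/leP.
apply: (Rmult_le_reg_r (ln (INR m.+1))) => //.
unfold Rdiv; rewrite Rmult_assoc Rinv_l; last lra.
lra.
Qed.
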